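(* Let $\Gamma$ be a finite group, $R$ a commutative ring with $\Gamma$-action, and $k\in\mathbb N$ with $\gcd(k,\mathrm{ord}(\Gamma))=1$. Then the $k$-th Adams operation $\psi^k$ on $K_0(R\#\Gamma)$ satisfies \[\psi^k([R\#\Gamma])=[R\#\Gamma]\quad\text{in }K_0(R\#\Gamma).\]
   Context: $R\#\Gamma$ is the twisted group ring ($R$-free on $\Gamma$, $(a\gamma)(b\delta)=a\gamma(b)\gamma\delta$); $K_0(R\#\Gamma)$ is the Grothendieck group of finitely generated projective $R\#\Gamma$-modules. Tensor products and exterior/symmetric powers are over $R$ with diagonal $\Gamma$-action. When $\gcd(k,\mathrm{ord}(\Gamma))$ is invertible in $R$, every module $\Lambda^{a_1}_R(M)\otimes_R\cdots\otimes_R\Lambda^{a_r}_R(M)$ with $a_1+\dots+a_r=k$ and $M$ f.g. projective over $R\#\Gamma$ is again f.g. projective over $R\#\Gamma$, and the $k$-th Adams operation is the additive map $\psi^k:K_0(R\#\Gamma)\to K_0(R\#\Gamma)$ determined by $\psi^k([M])=N_k([\Lambda^1M],\dots,[\Lambda^kM])$, where $N_k(s_1,\dots,s_k)$ is the $k$-th Newton polynomial $t_1^k+\dots+t_k^k$ written as an integer polynomial in the elementary symmetric functions $s_1,\dots,s_k$ of $t_1,\dots,t_k$, and a monomial $s_{a_1}\cdots s_{a_r}$ is interpreted as the class of $\Lambda^{a_1}M\otimes\cdots\otimes\Lambda^{a_r}M$. *)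

(* Defs.v *)
From HB Require Import structures.
From mathcomp Require Import all_boot all_algebra all_fingroup.
From mathcomp Require Import mpoly.

Set Implicit Arguments.
Unset Strict Implicit.
Unset Printing Implicit Defensive.
Import GRing.Theory.
Local Open Scope ring_scope.

(* Newton polynomial N_k in Z[s_1,..,s_k]: variable 'X_i stands for   *)
(* s_(i+1).  N_k is the (unique) polynomial with                      *)
(*   N_k(e_1(t),...,e_k(t)) = t_1^k + ... + t_k^k,                     *)
(* obtained via the fundamental theorem of symmetric polynomials      *)
Definition power_sum (k : nat) : {mpoly int[k]} := \sum_(i < k) 'X_i ^+ k.
Definition newton_poly (k : nat) : {mpoly int[k]} := symf (power_sum k).

(* Modules over the twisted group ring R#G that are free of finite    *)
(* rank over R.  Such a module is R^(idx) (column vectors indexed by  *)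
(* a finite type), with G acting semilinearly by                      *)
(*      g . v  =  smat g *m (act g applied entrywise to v).           *)
Section SRep.
Variables (gT : finGroupType) (R : comPzRingType).

Record srep := SRep { sidx : finType; smat : gT -> sidx -> sidx -> R }.
Arguments smat : clear implicits.

Definition srep_zero : srep := @SRep void (fun _ _ _ => 0).
Definition srep_unit : srep := @SRep unit (fun _ _ _ => 1).
(* the left regular module R#G : R-basis G, g.(r d) = g(r) (g d) *)
Definition srep_RG : srep := @SRep gT (fun g d e => ((d == (g * e)%g) : nat)%:R).

Definition srep_sum (V W : srep) : srep :=
  @SRep (sidx V + sidx W)%type
    (fun g i j => match i, j with
                  | inl a, inl b => smat V g a b
                  | inr a, inr b => smat W g a b
                  | _, _ => 0 end).
Definition srep_copies (c : nat) (V : srep) : srep :=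
  @SRep ('I_c * sidx V)%type
    (fun g i j => ((i.1 == j.1) : nat)%:R * smat V g i.2 j.2).
Definition srep_tens (V W : srep) : srep :=
  @SRep (sidx V * sidx W)%type
    (fun g i j => smat V g i.1 j.1 * smat W g i.2 j.2).

(* exterior power over R: basis e_J (J an a-subset, wedge taken in the *)
(* order given by enum_rank); the matrix of Lambda^a(A) has entries    *)
(* the a x a minors det(A_{I,J}) (Leibniz formula).                    *)
Definition ltI (T : finType) (x y : T) : bool := (enum_rank x < enum_rank y)%N.
Definition minor (T : finType) (A : T -> T -> R) (I J : {set T}) : R :=
  \sum_(f : {ffun T -> T} | [&& f @: J == I, #|f @: J| == #|J|
                              & [forall x, (x \notin J) ==> (f x == x)]])
     (-1) ^+ #|[set p : T * T | [&& p.1 \in J, p.2 \in J, ltI p.1 p.2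
                                  & ltI (f p.2) (f p.1)]]|
     * \prod_(j in J) A (f j) j.
Definition srep_ext (a : nat) (V : srep) : srep :=
  @SRep {S : {set sidx V} | #|S| == a}
    (fun g I J => minor (smat V g) (val I) (val J)).

Fixpoint srep_tpow (V : srep) (e : nat) : srep :=
  if e is e'.+1 then srep_tens V (srep_tpow V e') else srep_unit.

(* the module interpreting the monomial  prod_i s_(i+1)^(m i) :       *)
(*   (x)_i (Lambda^(i+1) V)^{(x) (m i)}                                *)
Definition srep_mon (k : nat) (m : 'X_{1..k}) (V : srep) : srep :=
  foldr (fun (i : 'I_k) acc => srep_tens (srep_tpow (srep_ext i.+1 V) (m i)) acc)
        srep_unit (enum 'I_k).

(* psi^k[V] = [adams_pos k V] - [adams_neg k V] in K_0 *)
Definition adams_pos (k : nat) (V : srep) : srep :=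
  foldr (fun m acc =>
           srep_sum (srep_copies `|(newton_poly k)@_m|%N (srep_mon m V)) acc)
        srep_zero [seq m <- msupp (newton_poly k) | 0 < (newton_poly k)@_m].
Definition adams_neg (k : nat) (V : srep) : srep :=
  foldr (fun m acc =>
           srep_sum (srep_copies `|(newton_poly k)@_m|%N (srep_mon m V)) acc)
        srep_zero [seq m <- msupp (newton_poly k) | (newton_poly k)@_m < 0].

(* isomorphism of R#G-modules: an R-linear bijection (matrix P with    *)
(* inverse Q) commuting with the semilinear G-actions:                 *)
(*   P (A_g g(v)) = B_g g(P v)  for all v,  i.e.  P A_g = B_g g(P).    *)
Definition srep_iso (act : gT -> R -> R) (V W : srep) : Prop :=
  exists (P : sidx W -> sidx V -> R) (Q : sidx V -> sidx W -> R),
    [/\ forall v v', \sum_w Q v w * P w v' = ((v == v') : nat)%:R,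
        forall w w', \sum_v P w v * Q v w' = ((w == w') : nat)%:R
      & forall g w v, \sum_t P w t * smat V g t v
                      = \sum_u smat W g w u * act g (P u v)].

End SRep.

(* Main.v *)
Require Import Defs.
From HB Require Import structures.
From mathcomp Require Import all_boot all_order all_algebra all_fingroup.
From mathcomp Require Import mpoly.
Set Implicit Arguments.
Unset Strict Implicit.
Unset Printing Implicit Defensive.
Import GRing.Theory Num.Theory.
Local Open Scope ring_scope.

Section Newton.
Variable k : nat.
Hypothesis k_gt0 : (0 < k)%N.

Lemma msymXi (s : 'S_k) (i : 'I_k) : msym s ('X_i : {mpoly int[k]}) = 'X_(s i).
Proof.
rewrite msymX; congr mpolyX; apply/mnmP => j; rewrite !mnmE.
by rewrite eq_sym -(inj_eq (@perm_inj _ s)) permKV eq_sym.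
Qed.

Lemma msymXn (s : 'S_k) (p : {mpoly int[k]}) n : msym s (p ^+ n) = msym s p ^+ n.
Proof. by elim: n => [|n IH]; rewrite ?expr0 ?msym1 // !exprS msymM IH. Qed.

Lemma power_sum_sym : power_sum k \is symmetric.
Proof.
apply/issymP => s; rewrite /power_sum raddf_sum /=.
rewrite (eq_bigr (fun i => 'X_(s i) ^+ k)); last by move=> i _; rewrite msymXn msymXi.
by rewrite [RHS](reindex_inj (@perm_inj _ s)).
Qed.

Lemma power_sum_homog : power_sum k \is k.-homog.
Proof.
rewrite /power_sum; apply: rpred_sum => i _.
have := @dhomogMn k int mdeg 1 'X_i k; rewrite mul1n; apply.
by rewrite dhomogX /= mdeg1.
Qed.

Lemma newton_S : newton_poly k \mPo [tuple mesym k int i.+1 | i < k] = power_sum k.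
Proof. by rewrite /newton_poly -symfP // power_sum_sym. Qed.

Lemma newton_wgt m : m \in msupp (newton_poly k) -> mnmwgt m = k.
Proof.
have : newton_poly k \is k.-homog for mnmwgt.
  by rewrite mwmwgt_homogE newton_S power_sum_homog.
by move/dhomog_mf; apply.
Qed.

Definition vj (j : nat) : 'I_k -> int := fun l => ((l < j)%N)%:R.

Lemma card_lt_ord j : (j <= k)%N -> #|[set l : 'I_k | (l < j)%N]| = j.
Proof.
move=> jk.
have -> : [set l : 'I_k | (l < j)%N] = [set widen_ord jk l | l : 'I_j].
  apply/setP => l; rewrite inE; apply/idP/imsetP => [lj|[l' _ ->]] //=.
  by exists (Ordinal lj) => //; apply: val_inj.
rewrite card_imset ?card_ord // => a b /(congr1 val) /= /val_inj //.
Qed.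

Lemma mesym_vj j d : (j <= k)%N -> (mesym k int d).@[vj j] = ('C(j, d))%:R.
Proof.
move=> jk; rewrite mesymE raddf_sum /=.
rewrite (eq_bigr (fun h : {set 'I_k} => ((h \subset [set l : 'I_k | (l < j)%N]) : nat)%:R : int)); last first.
  move=> h _; rewrite mevalX.
  rewrite (eq_bigr (fun l : 'I_k => (((l \in h) ==> (l < j)%N) : nat)%:R : int)); last first.
    move=> l _; rewrite /vj /mesym1 mnmE; case: (l \in h) => //=.
  apply/esym; case: (boolP (h \subset _)) => [/subsetP hs|].
    by rewrite big1 // => l _; case: (boolP (l \in h)) => //= /hs; rewrite inE => ->.
  case/subsetPn => l lh; rewrite inE => /negbTE lj.
  by rewrite (bigD1 l) //= lh lj mul0r.
rewrite -natr_sum; congr (_%:R).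
have -> : 'C(j, d) = 'C(#|[set l : 'I_k | (l < j)%N]|, d) by rewrite card_lt_ord.
rewrite -cards_draws.
rewrite -[RHS]sum1_card [RHS]big_mkcond [LHS]big_mkcond /=.
apply: eq_bigr => i _; rewrite inE andbC; by case: (#|i| == d); case: (i \subset _).
Qed.

Lemma newton_vj j : (j <= k)%N ->
  \sum_(m <- msupp (newton_poly k)) (newton_poly k)@_m *
      \prod_(i < k) ('C(j, i.+1))%:R ^+ m i = j%:R :> int.
Proof.
move=> jk; transitivity ((newton_poly k \mPo [tuple mesym k int i.+1 | i < k]).@[vj j]).
  rewrite comp_mpoly_meval mevalE; apply: eq_bigr => m _; congr (_ * _).
  by apply: eq_bigr => i _; rewrite tnth_mktuple mesym_vj.
rewrite newton_S /power_sum raddf_sum /=.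
rewrite (eq_bigr (fun i : 'I_k => (((i < j)%N : nat)%:R : int))); last first.
  move=> i _; rewrite rmorphXn /= mevalXU /vj.
  by case: (i < j)%N; rewrite ?expr1n ?expr0n //= eqn0Ngt k_gt0.
rewrite -natr_sum; congr (_%:R).
rewrite -[RHS](card_lt_ord jk) -sum1_card [RHS]big_mkcond /=.
by apply: eq_bigr => i _; rewrite inE.
Qed.

Definition binp (d : nat) : {poly rat} :=
  (d`!%:R)^-1 *: \prod_(l < d) ('X - (l%:R)%:P).

Lemma prod_ffact (n d : nat) : \prod_(l < d) (n%:R - l%:R : rat) = (n ^_ d)%:R.
Proof.
elim: d => [|d IH]; first by rewrite big_ord0 ffactn0.
rewrite big_ord_recr /= IH ffactnSr natrM.
case: (leqP d n) => dn; first by rewrite natrB.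
by rewrite (ffact_small dn) !mul0r.
Qed.

Lemma binpE d n : (binp d).[n%:R] = ('C(n, d))%:R.
Proof.
rewrite /binp hornerZ horner_prod.
rewrite (eq_bigr (fun l : 'I_d => (n%:R - l%:R : rat))); last first.
  by move=> l _; rewrite hornerXsubC.
rewrite prod_ffact -bin_ffact natrM mulrC -mulrA mulfV ?mulr1 //.
by rewrite pnatr_eq0 -lt0n fact_gt0.
Qed.

Lemma size_binp d : (size (binp d) <= d.+1)%N.
Proof.
apply: leq_trans (size_scale_leq _ _) _.
by rewrite size_prod_XsubC /index_enum -enumT size_enum_ord.
Qed.

Definition Pn : {poly rat} := \sum_(m <- msupp (newton_poly k))
   ((newton_poly k)@_m)%:~R *: \prod_(i < k) binp i.+1 ^+ m i.

Definition rankN (n : nat) : rat := \sum_(m <- msupp (newton_poly k))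
   ((newton_poly k)@_m)%:~R * \prod_(i < k) ('C(n, i.+1))%:R ^+ m i.

Lemma Pn_eval n : Pn.[n%:R] = rankN n.
Proof.
rewrite /Pn horner_sum; apply: eq_bigr => m _.
rewrite hornerZ horner_prod; congr (_ * _); apply: eq_bigr => i _.
by rewrite horner_exp binpE.
Qed.

Lemma size_Pn : (size Pn <= k.+1)%N.
Proof.
rewrite /Pn; apply: leq_trans (size_sum _ _ _) _.
rewrite big_seq_cond; apply: (big_ind (fun x => x <= k.+1)%N) => //.
  by move=> x y hx hy; rewrite geq_max hx hy.
move=> m /andP [mN _].
apply: leq_trans (size_scale_leq _ _) _.
apply: leq_trans (size_poly_prod_leq _ _) _.
rewrite card_ord leq_subLR.
apply: (@leq_trans (\sum_(i < k) (i.+1 * m i).+1).+1); last first.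
  have -> : (\sum_(i < k) (i.+1 * m i).+1 = mnmwgt m + k)%N.
    rewrite (eq_bigr (fun i : 'I_k => (m i * i.+1 + 1)%N)); last first.
      by move=> i _; rewrite addn1 mulnC.
    by rewrite big_split /= sum_nat_const card_ord muln1.
  by rewrite (newton_wgt mN) addnS.
rewrite ltnS; apply: leq_sum => i _.
apply: leq_trans (size_poly_exp_leq _ _) _.
rewrite ltnS leq_mul2r; apply/orP; right.
by have := size_binp i.+1; rewrite -ltnS; case: (size _) => //.
Qed.

Lemma rankN_small j : (j <= k)%N -> rankN j = j%:R.
Proof.
move=> jk; have := congr1 (fun z : int => z%:~R : rat) (newton_vj jk).
rewrite rmorph_sum /= [in RHS]rmorph_nat => <-; apply: eq_bigr => m _.
by rewrite rmorphM rmorph_prod /=; congr (_ * _); apply: eq_bigr => i _;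
  rewrite rmorphXn /= rmorph_nat.
Qed.

Lemma Pn_X : Pn = 'X.
Proof.
apply/eqP; rewrite -subr_eq0; apply/eqP.
apply: (@roots_geq_poly_eq0 _ _ [seq (j%:R : rat) | j <- iota 0 k.+1]).
- apply/allP => x /mapP [j]; rewrite mem_iota add0n ltnS => jk ->.
  by rewrite /root hornerD hornerN hornerX Pn_eval rankN_small // subrr.
- by rewrite map_inj_uniq ?iota_uniq // => a b /eqP; rewrite eqr_nat => /eqP.
- rewrite size_map size_iota; apply: leq_trans (size_polyD _ _) _.
  by rewrite geq_max size_Pn size_polyN size_polyX ltnS.
Qed.

Lemma rankN_eq n : rankN n = n%:R.
Proof. by rewrite -Pn_eval Pn_X hornerX. Qed.
End Newton.

Lemma odd_card_xor (X : finType) (A B : {set X}) :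
  odd #|[set x | (x \in A) (+) (x \in B)]| = odd #|A| (+) odd #|B|.
Proof.
rewrite -oddD -cardsUI -(cardsID (A :&: B) (A :|: B)).
have -> : (A :|: B) :&: (A :&: B) = A :&: B.
  by apply/setIidPr; apply: subset_trans (subsetIl _ _) (subsetUl _ _).
have -> : (A :|: B) :\: (A :&: B) = [set x | (x \in A) (+) (x \in B)].
  by apply/setP => x; rewrite !inE; case: (x \in A); case: (x \in B).
by rewrite addnC addnA addnn oddD odd_double.
Qed.

Section LtI.
Variable T : finType.
Implicit Types x y : T.

Lemma ltI_irr x : ltI x x = false.
Proof. by rewrite /ltI ltnn. Qed.

Lemma ltI_asym x y : ltI x y -> ltI y x = false.
Proof. by rewrite /ltI => /ltnW; rewrite leqNgt => /negbTE. Qed.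

Lemma ltI_neg x y : x != y -> ltI y x = ~~ ltI x y.
Proof.
move=> nxy; rewrite /ltI; case: ltngtP => //.
by move=> /val_inj /enum_rank_inj exy; rewrite exy eqxx in nxy.
Qed.

Lemma ltI_neq x y : ltI x y -> x != y.
Proof. by apply: contraTneq => ->; rewrite ltI_irr. Qed.

Definition invs (f : T -> T) (J : {set T}) :=
  [set p : T * T | [&& p.1 \in J, p.2 \in J, ltI p.1 p.2 & ltI (f p.2) (f p.1)]].

Lemma inv_cocycle (s t : T -> T) (J : {set T}) : injective s -> injective t ->
  odd #|invs (t \o s) J| = odd #|invs t (s @: J)| (+) odd #|invs s J|.
Proof.
move=> si ti.
pose C := [set p : T * T | [&& p.1 \in J, p.2 \in J, ltI p.1 p.2 &
             ltI (s p.1) (s p.2) != ltI (t (s p.1)) (t (s p.2))]].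
have eB : invs (t \o s) J = [set p | (p \in invs s J) (+) (p \in C)].
  apply/setP => [[x y]]; rewrite !inE /=.
  case: (x \in J) => //=; case: (y \in J) => //=.
  case: (boolP (ltI x y)) => //= lxy; have nxy := ltI_neq lxy.
  have nsxy : s x != s y by rewrite (inj_eq si).
  have ntxy : t (s x) != t (s y) by rewrite (inj_eq ti).
  rewrite (ltI_neg nsxy) (ltI_neg ntxy).
  by case: (ltI (s x) (s y)); case: (ltI (t (s x)) (t (s y))).
pose phi (p : T * T) := if ltI (s p.1) (s p.2) then (s p.1, s p.2) else (s p.2, s p.1).
have eC : invs t (s @: J) = phi @: C.
  apply/setP => [[u1 u2]]; rewrite inE /=; apply/idP/imsetP.
  - case/and4P => /imsetP [x xJ ->] /imsetP [y yJ ->] lu tu.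
    have nxy : x != y by apply: contraTneq lu => ->; rewrite ltI_irr.
    have nsxy : s x != s y by rewrite (inj_eq si).
    have ntxy : t (s x) != t (s y) by rewrite (inj_eq ti).
    case: (boolP (ltI x y)) => lxy.
    + exists (x, y); rewrite /phi /= ?lu //.
      by rewrite inE /= xJ yJ lxy lu (ltI_asym tu).
    + exists (y, x); rewrite /phi /= ?(ltI_asym lu) //.
      by rewrite inE /= xJ yJ (ltI_neg nxy) lxy (ltI_asym lu) tu.
  - case=> [[x y]]; rewrite inE /= => /and4P [xJ yJ lxy hC].
    have nxy := ltI_neq lxy.
    have nsxy : s x != s y by rewrite (inj_eq si).
    have ntxy : t (s x) != t (s y) by rewrite (inj_eq ti).
    rewrite /phi /=; case: (boolP (ltI (s x) (s y))) => ls [-> ->] /=; rewrite ?imset_f //=.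
    + rewrite ls /= (ltI_neg ntxy); move: hC; rewrite ls.
      by case: (ltI (t (s x)) (t (s y))).
    + rewrite (ltI_neg nsxy) ls /=; move: hC; rewrite (negbTE ls).
      by case: (ltI (t (s x)) (t (s y))).
have iC : {in C &, injective phi}.
  move=> [x y] [x' y']; rewrite !inE /= => /and4P [_ _ l1 _] /and4P [_ _ l2 _].
  rewrite /phi /=.
  case: (ltI (s x) (s y)); case: (ltI (s x') (s y')) => -[] /si e1 /si e2;
    subst => //.
  - by rewrite (ltI_asym l2) in l1.
  - by rewrite (ltI_asym l2) in l1.
by rewrite eB odd_card_xor eC (card_in_imset iC) addbC.
Qed.
End LtI.

Section MinorPerm.
Variables (R : comPzRingType) (T : finType).

Lemma prod_sign_card (J : {set T}) (b : T -> bool) :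
  \prod_(j in J) ((-1) ^+ b j : R) = (-1) ^+ (odd #|[set x in J | b x]|).
Proof.
rewrite signr_odd -(big_morph (fun n : nat => ((-1) ^+ n : R)) (fun m n => exprD _ m n) (expr0 _)).
congr (_ ^+ _); rewrite -sum1_card big_mkcond [RHS]big_mkcond /=.
by apply: eq_bigr => x _; rewrite !inE; case: (x \in J); case: (b x).
Qed.

Lemma minor_perm (s : T -> T) (si : injective s) (b : T -> bool) (I J : {set T}) :
  minor (fun y x => (-1) ^+ b x * ((y == s x) : nat)%:R : R) I J
  = ((s @: J == I) : nat)%:R * ((-1) ^+ (odd #|invs s J| (+) odd #|[set x in J | b x]|)).
Proof.
rewrite /minor; set f0 := [ffun x => if x \in J then s x else x].
have f0J : f0 @: J = s @: J by apply: eq_in_imset => x xJ; rewrite ffunE xJ.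
have zero (f : {ffun T -> T}) : [forall x, (x \notin J) ==> (f x == x)] -> f != f0 ->
    \prod_(j in J) ((-1) ^+ b j * ((f j == s j) : nat)%:R : R) = 0.
  move=> /forallP fJ nf; have [j jJ fj] : exists2 j, j \in J & f j != s j.
    apply/exists_inP; apply: contraR nf => /exists_inPn H; apply/eqP/ffunP => x.
    rewrite ffunE; case: ifP => xJ; first exact/eqP/(negbNE (H x xJ)).
    by move: (fJ x); rewrite xJ => /eqP.
  by rewrite (bigD1 j) //= (negbTE fj) mulr0 mul0r.
have cf0 : [forall x, (x \notin J) ==> (f0 x == x)].
  by apply/forallP => x; apply/implyP => xJ; rewrite ffunE (negbTE xJ).
case: (eqVneq (s @: J) I) => [eI|nI] /=.
- rewrite mul1r (bigD1 f0) /=; last first.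
    by rewrite f0J eI eqxx -eI card_imset // eqxx cf0.
  rewrite [X in _ + X]big1 ?addr0; last first.
    move=> f /andP [/and3P [_ _ cf] nf]; by rewrite zero // mulr0.
  rewrite signr_addb -prod_sign_card; congr (_ * _).
    rewrite -signr_odd; congr ((-1) ^+ (odd _)); apply: eq_card => p.
    by rewrite !inE !ffunE; case: (p.1 \in J); case: (p.2 \in J).
  by apply: eq_bigr => j jJ; rewrite ffunE jJ eqxx mulr1.
- rewrite mul0r big1 // => f /and3P [/eqP fI _ cf].
  have nf : f != f0 by apply: contra_neq nI => ef; rewrite -f0J -ef fI.
  by rewrite zero // mulr0.
Qed.
End MinorPerm.

Section SP.
Variables (gT : finGroupType) (R : comPzRingType).
Local Notation srep := (srep gT R).

Definition sp (V : srep) (a : gT -> sidx V -> sidx V) (e : gT -> sidx V -> bool) : Prop :=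
  [/\ forall x, a 1%g x = x,
      forall g h x, a (g * h)%g x = a g (a h x),
      forall g h x, e (g * h)%g x = e g (a h x) (+) e h x
    & forall g y x, smat g y x = (-1) ^+ e g x * ((y == a g x) : nat)%:R].

Arguments sp : clear implicits.

Definition SPd (V : srep) (d : nat) : Prop :=
  exists a e, sp V a e /\ (forall g x, a g x = x -> (#[g]%g %| d)%N).

Lemma sp_inj V a e : sp V a e -> forall g, injective (a g).
Proof.
case=> a1 aM _ _ g x y H.
by rewrite -(a1 x) -(a1 y) -(mulVg g) !aM H.
Qed.

Lemma SPd_zero d : SPd (srep_zero gT R) d.
Proof.
by exists (fun _ x => x), (fun _ _ => false); split; [split|] => //; move=> ? [].
Qed.

Lemma SPd_unit : SPd (srep_unit gT R) 0.
Proof.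
exists (fun _ x => x), (fun _ _ => false); split; first split => //.
- by move=> g [] []; rewrite /= expr0 mul1r.
by move=> g x _; rewrite dvdn0.
Qed.

Lemma SPd_RG d : SPd (srep_RG gT R) d.
Proof.
exists (fun g x => (g * x)%g), (fun _ _ => false); split; first split => //=.
- by move=> x; rewrite mul1g.
- by move=> g h x; rewrite mulgA.
- by move=> g y x; rewrite expr0 mul1r.
move=> g x /eqP; rewrite -{2}(mul1g x) (can_eq (mulgK x)) => /eqP ->.
by rewrite order1 dvd1n.
Qed.

Lemma SPd_sum V W d : SPd V d -> SPd W d -> SPd (srep_sum V W) d.
Proof.
move=> [a [e [[a1 aM eM sV] dV]]] [b [f [[b1 bM fM sW] dW]]].
exists (fun g x => match x with inl y => inl (a g y) | inr y => inr (b g y) end).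
exists (fun g x => match x with inl y => e g y | inr y => f g y end).
split; first split.
- by case=> y; rewrite ?a1 ?b1.
- by move=> g h [] y; rewrite ?aM ?bM.
- by move=> g h [] y; rewrite ?eM ?fM.
- by move=> g [] y [] x //=; rewrite ?sV ?sW ?mulr0.
by move=> g [] y [] H; [apply: (dV g y) | apply: (dW g y)].
Qed.

Lemma SPd_copies c V d : SPd V d -> SPd (srep_copies c V) d.
Proof.
move=> [a [e [[a1 aM eM sV] dV]]].
exists (fun g x => (x.1, a g x.2)), (fun g x => e g x.2).
split; first split.
- by case=> i y /=; rewrite a1.
- by move=> g h [i y] /=; rewrite aM.
- by move=> g h [i y] /=; rewrite eM.
- move=> g [i y] [j x] /=; rewrite sV xpair_eqE /=.
  by case: (i == j); rewrite /= ?mul1r ?mul0r ?mulr0.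
by move=> g [i y] [] /dV.
Qed.

Lemma SPd_tens V W d1 d2 : SPd V d1 -> SPd W d2 -> SPd (srep_tens V W) (d1 + d2).
Proof.
move=> [a [e [[a1 aM eM sV] dV]]] [b [f [[b1 bM fM sW] dW]]].
exists (fun g x => (a g x.1, b g x.2)), (fun g x => e g x.1 (+) f g x.2).
split; first split.
- by case=> y z /=; rewrite a1 b1.
- by move=> g h [y z] /=; rewrite aM bM.
- by move=> g h [y z] /=; rewrite eM fM addbACA.
- move=> g [y z] [x w] /=; rewrite sV sW xpair_eqE /= signr_addb.
  by case: (y == _); case: (z == _); rewrite /= ?mulr1 ?mulr0 ?mul0r // mulrACA.
by move=> g [y z] [] /dV Hd /dW He; rewrite dvdn_add.
Qed.

Lemma SPd_tpow V d n : SPd V d -> SPd (srep_tpow V n) (d * n).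
Proof.
move=> HV; elim: n => [|n IH] /=; first by rewrite muln0; apply: SPd_unit.
by rewrite mulnS; apply: SPd_tens.
Qed.


Lemma minor_ext (T : finType) (A B : T -> T -> R) I J : A =2 B -> minor A I J = minor B I J.
Proof.
move=> AB; rewrite /minor; apply: eq_bigr => f _; congr (_ * _).
by apply: eq_bigr => j _; rewrite AB.
Qed.

Section Ext.
Variables (V : srep) (a : gT -> sidx V -> sidx V) (e : gT -> sidx V -> bool) (n : nat).
Hypothesis spV : sp V a e.
Local Notation I := (sidx (srep_ext n V)).

Definition extA (g : gT) (S : I) : I := insubd S (a g @: val S).
Definition extE (g : gT) (S : I) : bool :=
  odd #|invs (a g) (val S)| (+) odd #|[set x in val S | e g x]|.

Lemma extA_val g S : val (extA g S) = a g @: val S.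
Proof.
rewrite /extA insubdK // -topredE /= card_imset ?(valP S) //.
exact: (sp_inj spV).
Qed.

Lemma sp_ext : sp (srep_ext n V) extA extE.
Proof.
case: (spV) => a1 aM eM sV; have ai := sp_inj spV.
split.
- move=> S; apply: val_inj; rewrite extA_val.
  by rewrite (eq_imset _ a1) imset_id.
- move=> g h S; apply: val_inj; rewrite !extA_val -imset_comp.
  by apply: eq_imset => x; rewrite aM.
- move=> g h S; rewrite /extE extA_val.
  have -> : invs (a (g * h)%g) (val S) = invs (a g \o a h) (val S).
    by apply/setP => p; rewrite !inE /= !aM.
  rewrite inv_cocycle //.
  have -> : [set x in val S | e (g * h)%g x] =
            [set x | (x \in [set x in val S | e g (a h x)]) (+) (x \in [set x in val S | e h x])].
    by apply/setP => x; rewrite !inE eM; case: (x \in val S).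
  rewrite odd_card_xor.
  have -> : #|[set x in val S | e g (a h x)]| = #|[set x in a h @: val S | e g x]|.
    rewrite -(card_imset _ (ai h)); apply: eq_card => y; rewrite !inE.
    apply/imsetP/andP => [[x] | [/imsetP [x xS ->] ex]].
      by rewrite inE => /andP [xS ex] ->; rewrite imset_f.
    by exists x; rewrite // inE xS.
  by rewrite -!addbA; congr addb; rewrite addbCA.
- move=> g I1 J1 /=.
  rewrite (minor_ext (B := fun y x => (-1) ^+ e g x * ((y == a g x) : nat)%:R)); last first.
    by move=> y x; rewrite sV.
  rewrite (minor_perm _ (ai g)).
  have -> : (I1 == extA g J1) = (val I1 == val (extA g J1)) by rewrite val_eqE.
  by rewrite extA_val eq_sym mulrC.
Qed.
End Ext.

Lemma sp_RG : sp (srep_RG gT R) (fun g x => (g * x)%g) (fun _ _ => false).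
Proof.
split => //=.
- by move=> x; rewrite mul1g.
- by move=> g h x; rewrite mulgA.
- by move=> g y x; rewrite expr0 mul1r.
Qed.

Lemma rcosets_partition_mulA (H : {group gT}) (A : {set gT}) :
  partition (rcosets H A) (H * A)%g.
Proof.
set HG := (H * A)%g; have sGHG: {subset A <= HG} by apply/subsetP/mulG_subr.
have defHx x: x \in HG -> [set y in HG | rcoset H x == rcoset H y] = (H :* x)%g.
  move=> HGx; apply/setP=> y; rewrite inE !rcosetE (sameP eqP rcoset_eqP).
  by rewrite rcoset_sym; apply/andb_idl/subsetP; rewrite mulGS sub1set.
have:= preim_partitionP (rcoset H) HG; congr (partition _ _); apply/setP=> Hx.
apply/imsetP/idP=> [[x HGx ->] | ]; first by rewrite defHx // mem_rcosets.
by case/rcosetsP=> x /sGHG-HGx ->; exists x; rewrite ?defHx.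
Qed.

Lemma SPd_ext_RG n : SPd (srep_ext n (srep_RG gT R)) n.
Proof.
exists (@extA (srep_RG gT R) (fun g x => (g * x)%g) n), (@extE (srep_RG gT R) (fun g x => (g * x)%g) (fun _ _ => false) n).
split; first exact: sp_ext sp_RG.
move=> g S /(congr1 val); rewrite (extA_val sp_RG) => eS.
have nS : #|val S| = n by apply/eqP; exact: (valP S).
have HS : (<[g]> * val S)%g = val S.
  apply/eqP; rewrite eqEsubset; apply/andP; split; last first.
    by apply: mulG_subr; rewrite group1.
  apply/subsetP => z /mulsgP [c x /cycleP [i ->] xS ->].
  elim: i => [|i IH]; first by rewrite expg0 mul1g.
  by rewrite expgS -mulgA -eS; apply: imset_f.
rewrite -nS -HS (card_uniform_partition (n := #[g]%g) _ (rcosets_partition_mulA <[g]>%G (val S))) ?dvdn_mull //.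
by move=> A /rcosetsP [x _ ->]; rewrite card_rcoset.
Qed.

End SP.

Section Struct.
Variables (gT : finGroupType) (R : comPzRingType).
Local Notation srep := (srep gT R).
Local Notation RG := (srep_RG gT R).

Lemma SPd_mon_seq k (m : 'X_{1..k}) (s : seq 'I_k) :
  SPd (foldr (fun (i : 'I_k) acc => srep_tens (srep_tpow (srep_ext i.+1 RG) (m i)) acc)
        (srep_unit gT R) s) (\sum_(i <- s) (i.+1 * m i))%N.
Proof.
elim: s => [|i s IH] /=; first by rewrite big_nil; apply: SPd_unit.
by rewrite big_cons; apply: SPd_tens => //; apply: SPd_tpow; apply: SPd_ext_RG.
Qed.

Lemma SPd_mon k (m : 'X_{1..k}) : SPd (srep_mon m RG) (mnmwgt m).
Proof.
have := SPd_mon_seq m (enum 'I_k); rewrite big_enum /= /mnmwgt.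
by rewrite (eq_bigr (fun i : 'I_k => m i * i.+1)%N) // => i _; rewrite mulnC.
Qed.

Lemma SPd_adams_seq k (s : seq 'X_{1..k}) : (forall m, m \in s -> mnmwgt m = k) ->
  SPd (foldr (fun m acc =>
           srep_sum (srep_copies `|(newton_poly k)@_m|%N (srep_mon m RG)) acc)
        (srep_zero gT R) s) k.
Proof.
elim: s => [|m s IH] H /=; first exact: SPd_zero.
apply: SPd_sum; last by apply: IH => m' ms; apply: H; rewrite inE ms orbT.
by apply: SPd_copies; have := SPd_mon m; rewrite (H m) ?mem_head.
Qed.

Lemma SPd_adams_pos k : SPd (adams_pos k RG) k.
Proof.
by apply: SPd_adams_seq => m; rewrite mem_filter => /andP [_ /newton_wgt].
Qed.

Lemma SPd_adams_neg k : SPd (adams_neg k RG) k.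
Proof.
by apply: SPd_adams_seq => m; rewrite mem_filter => /andP [_ /newton_wgt].
Qed.

Lemma card_ext n (V : srep) : #|sidx (srep_ext n V)| = 'C(#|sidx V|, n).
Proof. by rewrite card_sig -card_draws; apply: eq_card => S; rewrite !inE. Qed.

Lemma card_tpow (V : srep) n : #|sidx (srep_tpow V n)| = (#|sidx V| ^ n)%N.
Proof.
elim: n => [|n IH] /=; first by rewrite card_unit.
by rewrite card_prod IH expnS.
Qed.

Lemma card_mon k (m : 'X_{1..k}) :
  #|sidx (srep_mon m RG)| = (\prod_(i < k) 'C(#|gT|, i.+1) ^ m i)%N.
Proof.
rewrite /srep_mon -(big_enum _ _ 'I_k) /=; elim: (enum 'I_k) => [|i s IH] /=.
  by rewrite big_nil card_unit.
by rewrite big_cons card_prod IH card_tpow card_ext.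
Qed.

Lemma card_adams_seq k (s : seq 'X_{1..k}) :
  #|sidx (foldr (fun m acc =>
           srep_sum (srep_copies `|(newton_poly k)@_m|%N (srep_mon m RG)) acc)
        (srep_zero gT R) s)| =
  (\sum_(m <- s) `|(newton_poly k)@_m|%N * \prod_(i < k) 'C(#|gT|, i.+1) ^ m i)%N.
Proof.
elim: s => [|m s IH] /=; first by rewrite big_nil card_void.
by rewrite big_cons card_sum IH card_prod card_ord card_mon.
Qed.

End Struct.

Section Orbit.
Variables (gT : finGroupType) (T : finType) (a : gT -> T -> T).
Hypotheses (a1 : forall x, a 1%g x = x) (aM : forall g h x, a (g * h)%g x = a g (a h x))
  (free : forall g x, a g x = x -> g = 1%g).

Definition orb x := [set a g x | g in [set: gT]].
Definition rep x := odflt x [pick y in orb x].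
Definition dd x := odflt 1%g [pick g | a g (rep x) == x].

Lemma act_inj_g g h x : a g x = a h x -> g = h.
Proof.
move=> E; have : a (h^-1 * g)%g x = x by rewrite aM E -aM mulVg a1.
by move/free => E2; apply/eqP; rewrite eq_sym eq_mulVg1 E2.
Qed.

Lemma orb_act h x : orb (a h x) = orb x.
Proof.
apply/setP => y; apply/imsetP/imsetP => [[g _ ->]|[g _ ->]].
  by exists (g * h)%g; rewrite ?inE // aM.
by exists (g * h^-1)%g; rewrite ?inE // aM -(aM h^-1 h) mulVg a1.
Qed.

Lemma orb_self x : x \in orb x.
Proof. by apply/imsetP; exists 1%g; rewrite ?inE ?a1. Qed.

Lemma rep_in x : rep x \in orb x.
Proof.
rewrite /rep; case: pickP => [y //|/(_ x)] /=.
have -> // : x \in orb x.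
by apply/imsetP; exists 1%g; rewrite ?inE ?a1.
Qed.

Lemma rep_act h x : rep (a h x) = rep x.
Proof.
rewrite /rep orb_act; case: pickP => // /(_ x); by rewrite /= orb_self.
Qed.

Lemma dd_spec x : a (dd x) (rep x) = x.
Proof.
rewrite /dd; case: pickP => [g /eqP //|H].
have /imsetP [g _ e] := rep_in x.
have := H (g^-1)%g; rewrite /= e -aM mulVg.
move/negbT/negP => []; apply/eqP; exact: a1.
Qed.

Lemma dd_act h x : dd (a h x) = (h * dd x)%g.
Proof.
apply: (@act_inj_g _ _ (rep x)); rewrite aM dd_spec -{1}(rep_act h x).
by rewrite dd_spec.
Qed.

Lemma rep_rep x : rep (rep x) = rep x.
Proof. by rewrite -{2}(dd_spec x) rep_act. Qed.

Lemma dd_rep x : dd (rep x) = 1%g.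
Proof.
apply: (@act_inj_g _ _ (rep x)); rewrite a1 -{2}(rep_rep x).
by rewrite dd_spec.
Qed.

Definition reps := [set x | rep x == x].

Lemma card_reps : #|T| = (#|gT| * #|reps|)%N.
Proof.
have inj : injective (fun x => (dd x, rep x)).
  by move=> x y [e1 e2]; rewrite -(dd_spec x) -(dd_spec y) e1 e2.
rewrite -cardsT -(card_imset _ inj) -(cardsT gT) -cardsX.
apply: eq_card => -[g r]; rewrite !inE /=; apply/imsetP/idP => [[x _ [eg er]]|rr].
  by rewrite er rep_rep.
exists (a g r); rewrite ?inE //; move/eqP: rr => rr.
have dr : dd r = 1%g by rewrite -{1}rr dd_rep.
by rewrite dd_act rep_act dr mulg1 rr.
Qed.

End Orbit.

Section Iso.
Variables (gT : finGroupType) (R : comPzRingType) (act : gT -> {rmorphism R -> R}).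
Local Notation srep := (srep gT R).

Lemma sum_pick (T : finType) (t0 : T) (F : T -> R) (P : T -> bool) :
  (forall t, t != t0 -> P t = false) ->
  \sum_t ((P t : nat)%:R * F t) = (P t0 : nat)%:R * F t0.
Proof.
move=> H; rewrite (bigD1 t0) //= big1 ?addr0 // => t nt.
by rewrite H // mul0r.
Qed.

Lemma iso_of_equiv (V W : srep) a e b f (phi : sidx V -> sidx W) (sg : sidx V -> bool) :
  @sp _ _ V a e -> @sp _ _ W b f -> injective phi -> (forall w, exists v, phi v = w) ->
  (forall g x, phi (a g x) = b g (phi x)) ->
  (forall g x, sg (a g x) = sg x (+) e g x (+) f g (phi x)) ->
  srep_iso (fun g => act g) V W.
Proof.
move=> [a1 aM eM sV] [b1 bM fM sW] phii phis phiE sgE.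
exists (fun w x => ((w == phi x) : nat)%:R * (-1) ^+ sg x),
       (fun x w => ((w == phi x) : nat)%:R * (-1) ^+ sg x).
split.
- move=> v v'.
  rewrite (eq_bigr (fun w => ((w == phi v) : nat)%:R * ((-1) ^+ sg v * (((w == phi v') : nat)%:R * (-1) ^+ sg v')))); last first.
    by move=> w _; rewrite mulrA.
  rewrite (@sum_pick _ (phi v)); last by move=> t /negbTE.
  rewrite eqxx mul1r (inj_eq phii); case: (eqVneq v v') => [->|]; last by rewrite mul0r mulr0.
  by rewrite mul1r -signr_addb addbb.
- move=> w w'; have [v0 <-] := phis w.
  rewrite (eq_bigr (fun v => ((v == v0) : nat)%:R * ((-1) ^+ sg v * (((w' == phi v) : nat)%:R * (-1) ^+ sg v)))); last first.
    by move=> v _; rewrite (inj_eq phii) eq_sym mulrA.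
  rewrite (@sum_pick _ v0); last by move=> t /negbTE.
  by rewrite eqxx mul1r eq_sym mulrCA -signr_addb addbb mulr1.
- move=> g w v.
  rewrite (eq_bigr (fun t => ((t == a g v) : nat)%:R * (((w == phi t) : nat)%:R * (-1) ^+ sg t * (-1) ^+ e g v))); last first.
    by move=> t _; rewrite sV [RHS]mulrC -!mulrA.
  rewrite (@sum_pick _ (a g v)); last by move=> t /negbTE.
  rewrite (eq_bigr (fun u => ((u == phi v) : nat)%:R * ((-1) ^+ f g u * ((w == b g u) : nat)%:R * (-1) ^+ sg v))); last first.
    move=> u _; rewrite sW rmorphM rmorph_sign rmorph_nat.
    by case: (u == phi v); rewrite /= ?mul1r ?mul0r ?mulr0.
  rewrite (@sum_pick _ (phi v)); last by move=> t /negbTE.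
  rewrite !eqxx !mul1r phiE sgE !signr_addb.
  case: (w == b g (phi v)); rewrite /= ?mulr0 ?mul0r // !mulr1 mul1r.
  rewrite -!signr_addb; congr ((-1) ^+ (nat_of_bool _)).
  by case: (sg v); case: (e g v); case: (f g (phi v)).
Qed.


Lemma iso_free (V W : srep) a e b f :
  @sp _ _ V a e -> @sp _ _ W b f ->
  (forall g x, a g x = x -> g = 1%g) -> (forall g x, b g x = x -> g = 1%g) ->
  #|sidx V| = #|sidx W| -> srep_iso (fun g => act g) V W.
Proof.
move=> spV spW fa fb cVW.
have spV' := spV; have spW' := spW.
case: spV' => a1 aM eM _; case: spW' => b1 bM fM _.
case: (pickP (@predT (sidx W))) => [y0 _|hW]; last first.
  have c0 : #|sidx W| = 0%N by apply: eq_card0.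
  have nv : sidx V -> False.
    by move=> v; have := card0_eq (etrans cVW c0) v; rewrite !inE.
  have nw : sidx W -> False by move=> w; have := hW w.
  apply: (@iso_of_equiv V W a e b f (fun v => match nv v with end) (fun _ => false) spV spW).
  - by move=> x; case: (nv x).
  - by move=> w; case: (nw w).
  - by move=> g x; case: (nv x).
  - by move=> g x; case: (nv x).
pose RV := enum (reps a); pose RW := enum (reps b).
have szeq : size RV = size RW.
  rewrite -!cardE; apply/eqP; rewrite -(@eqn_pmul2l #|gT|) ?cardG_gt0 //.
    by rewrite -(card_reps a1 aM fa) -(card_reps b1 bM fb) cVW.
  by rewrite lt0n; apply/eqP => /card0_eq /(_ 1%g); rewrite !inE.
pose psi r := nth y0 RW (index r RV).
have psi_in r : r \in reps a -> psi r \in reps b.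
  by move=> rr; rewrite -mem_enum mem_nth // -szeq index_mem mem_enum.
have psi_inj : {in reps a &, injective psi}.
  move=> r r' rr rr' /eqP; rewrite /psi nth_uniq ?enum_uniq // -?szeq ?index_mem ?mem_enum //.
  move/eqP => E.
  have h1 : nth r RV (index r RV) = r by apply: nth_index; rewrite mem_enum.
  have h2 : nth r RV (index r' RV) = r' by apply: nth_index; rewrite mem_enum.
  by rewrite -h1 E h2.
pose phi x := b (dd a x) (psi (rep a x)).
have phiE g x : phi (a g x) = b g (phi x).
  by rewrite /phi (dd_act a1 aM fa) (rep_act a1 aM) bM.
have repsr x : rep a x \in reps a by rewrite inE (rep_rep a1 aM).
have rep_psi x : rep b (phi x) = psi (rep a x).
  rewrite /phi (rep_act b1 bM); have := psi_in _ (repsr x); by rewrite inE => /eqP.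
have phii : injective phi.
  move=> x x' E; have := congr1 (rep b) E; rewrite !rep_psi => /psi_inj.
  move=> /(_ (repsr x) (repsr x')) er.
  move: E; rewrite /phi er => /(act_inj_g b1 bM fb) ed.
  by rewrite -(dd_spec a1 aM x) -(dd_spec a1 aM x') ed er.
apply: (@iso_of_equiv V W a e b f phi
          (fun x => e (dd a x) (rep a x) (+) f (dd a x) (psi (rep a x)))) => //.
- move=> w; have : w \in codom phi by apply: inj_card_onto => //; rewrite cVW.
  by case/codomP => v ->; exists v.
- move=> g x; rewrite (dd_act a1 aM fa) (rep_act a1 aM) eM fM (dd_spec a1 aM).
  rewrite -/(phi x) /phi.
  set p := e g x; set q := e (dd a x) _; set r := f g _; set s := f (dd a x) _.
  by clearbody p q r s; case: p; case: q; case: r; case: s.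
Qed.
End Iso.

Import Order.TTheory.

Lemma count_key k (k_gt0 : (0 < k)%N) (n : nat) :
  let c m := (newton_poly k)@_m in
  let w (m : 'X_{1..k}) := (\prod_(i < k) 'C(n, i.+1) ^ m i)%N in
  (\sum_(m <- msupp (newton_poly k) | (0 < c m)%R) `|c m|%N * w m =
   \sum_(m <- msupp (newton_poly k) | (c m < 0)%R) `|c m|%N * w m + n)%N.
Proof.
move=> c w; apply/eqP; rewrite -(eqr_nat rat) natrD !natr_sum; apply/eqP.
have := rankN_eq k_gt0 n; rewrite /rankN (bigID (fun m => 0 < c m)) /= => E.
rewrite -E.
have cpos m : 0 < c m -> (`|c m|%N%:R : rat) = (c m)%:~R.
  by move=> h; rewrite -{2}(gtz0_abs h).
have cneg m : c m < 0 -> (`|c m|%N%:R : rat) = - (c m)%:~R.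
  by move=> h; rewrite -[X in _ = - X%:~R](opprK (c m)) -(ltz0_abs h) mulrNz opprK.
have wE m : ((w m)%:R : rat) = \prod_(i < k) ('C(n, i.+1))%:R ^+ m i.
  by rewrite /w natr_prod; apply: eq_bigr => i _; rewrite natrX.
have -> : \sum_(m <- msupp (newton_poly k) | 0 < c m) ((`|c m|%N * w m)%N%:R : rat) =
          \sum_(m <- msupp (newton_poly k) | 0 < c m) (c m)%:~R * \prod_(i < k) ('C(n, i.+1))%:R ^+ m i.
  by apply: eq_bigr => m h; rewrite natrM cpos // wE.
have -> : \sum_(m <- msupp (newton_poly k) | c m < 0) ((`|c m|%N * w m)%N%:R : rat) =
          - \sum_(m <- msupp (newton_poly k) | ~~ (0 < c m)) (c m)%:~R * \prod_(i < k) ('C(n, i.+1))%:R ^+ m i.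
  rewrite -sumrN big_seq_cond [RHS]big_seq_cond; apply: eq_big => m.
    case: (boolP (m \in msupp _)) => //= ms; have : c m != 0 by rewrite /c mcoeff_eq0 negbK.
    by rewrite -leNgt le_eqVlt => /negbTE ->.
  by case/andP => _ h; rewrite natrM cneg // wE mulNr.
by rewrite addrCA addNr addr0.
Qed.

Unset Implicit Arguments.

Theorem theorem1p6 (gT : finGroupType) (R : comPzRingType)
  (act : gT -> {rmorphism R -> R})
  (act1 : forall x : R, act 1%g x = x)
  (actM : forall (g h : gT) (x : R), act (g * h)%g x = act g (act h x))
  (k : nat) (k_gt0 : (0 < k)%N) (cop : coprime k #|gT|) :
  exists m : nat,
    srep_iso (fun g => act g)
      (srep_sum (adams_pos k (srep_RG gT R)) (srep_copies m (srep_RG gT R)))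
      (srep_sum (srep_sum (adams_neg k (srep_RG gT R)) (srep_RG gT R))
                (srep_copies m (srep_RG gT R))).
Proof.
exists 0%N.
have freek (g : gT) : (#[g]%g %| k)%N -> g = 1%g.
  move=> dk; apply/eqP; rewrite -order_eq1 -dvdn1 -(eqP cop) dvdn_gcd dk /=.
  by rewrite -cardsT; apply: cardSg; apply: subsetT.
have [a [e [spV dV]]] : SPd (srep_sum (adams_pos k (srep_RG gT R)) (srep_copies 0 (srep_RG gT R))) k.
  by apply: SPd_sum; [apply: SPd_adams_pos | apply: SPd_copies; apply: SPd_RG].
have [b [f [spW dW]]] : SPd (srep_sum (srep_sum (adams_neg k (srep_RG gT R)) (srep_RG gT R))
                (srep_copies 0 (srep_RG gT R))) k.
  by apply: SPd_sum; [apply: SPd_sum; [apply: SPd_adams_neg | apply: SPd_RG] | apply: SPd_copies; apply: SPd_RG].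
apply: (iso_free act spV spW).
- by move=> g x /dV /freek.
- by move=> g x /dW /freek.
rewrite !card_sum !card_prod card_ord !mul0n !addn0.
rewrite /adams_pos /adams_neg !card_adams_seq !big_filter.
exact: count_key.
Qed.
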